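(* Let $P=P_1\cdots P_p$ and $T=T_1\cdots T_t$ be strings over a finite alphabet $\Sigma$, and let $R_U^j,R_M^j$ be the vectors computed by the GSM recurrence described in the context. For every $j\in\{1,\dots,t\}$ we have $(R_U^j)_p=1$ or $(R_M^j)_p=1$ if and only if $j\ge p$ and $P$ swap matches $T$ at location $j-p+1$. Equivalently, the GSM algorithm, which at step $j$ reports a match at position $j-p+1$ exactly when $(R_U^j)_p=1$ or $(R_M^j)_p=1$, reports precisely all locations at which $P$ swap matches $T$.
   Context: Strings: for a string $S$, $S_i$ is its $i$-th symbol and $S_{[i,j]}=S_iS_{i+1}\cdots S_j$. A swap permutation for a string $S$ of length $n$ is a permutation $\pi$ of $\{1,\dots,n\}$ such that (i) if $\pi(i)=j$ then $\pi(j)=i$; (ii) $\pi(i)\in\{i-1,i,i+1\}$ for all $i$; (iii) if $\pi(i)\neq i$ then $S_{\pi(i)}\neq S_i$. The swapped version is $\pi(S)=S_{\pi(1)}S_{\pi(2)}\cdots S_{\pi(n)}$. The pattern $P$ swap matches the text $T$ at location $i$ if there is a swap permutation $\pi$ for $P$ with $\pi(P)=T_{[i,i+p-1]}$. Bit vectors: all vectors below are elements of $\{0,1\}^p$ with entries indexed $1,\dots,p$; $\mid$ and $\&$ are bitwise OR and AND. $\mathit{LShift}(x)_1=0$ and $\mathit{LShift}(x)_i=x_{i-1}$ for $2\le i\le p$; $\mathit{RShift}(x)_i=x_{i+1}$ for $1\le i\le p-1$ and $\mathit{RShift}(x)_p=0$; $\mathit{LSO}(x)=\mathit{LShift}(x)\mid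 e_1$, where $e_1$ has a $1$ in entry $1$ and $0$ elsewhere. Masks: for $x\in\Sigma$, $D^x_i=1$ iff $P_i=x$. GSM recurrence: $R_U^0=R_M^0=R_D^0=0^p$, and for $j=1,\dots,t$: $R_U'^{\,j}=\mathit{LSO}(R_D^{j-1})$, $R_M'^{\,j}=R_D'^{\,j}=\mathit{LSO}(R_M^{j-1}\mid R_U^{j-1})$, $R_U^{j}=R_U'^{\,j}\ \&\ \mathit{LShift}(D^{T_j})$, $R_M^{j}=R_M'^{\,j}\ \&\ D^{T_j}$, $R_D^{j}=R_D'^{\,j}\ \&\ \mathit{RShift}(D^{T_j})$. *)

(* Defs.v *)
From mathcomp Require Import all_boot all_fingroup.
Set Implicit Arguments. Unset Strict Implicit. Unset Printing Implicit Defensive.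

Section Defs.
Variable Sigma : finType.

(* A string S is a [seq Sigma]; positions are 0-based ordinals k : 'I_(size S),
   position k corresponding to the paper's 1-based index k+1. *)
Definition sym (S : seq Sigma) (k : 'I_(size S)) : Sigma := tnth (in_tuple S) k.

Definition is_swap_perm (S : seq Sigma) (pi : {perm 'I_(size S)}) : Prop :=
  (forall k, pi (pi k) = k) /\
  (forall k : 'I_(size S), (pi k : nat) \in [:: k.-1; (k : nat); k.+1]) /\
  (forall k, pi k != k -> sym (pi k) != sym k).

Definition swapped (S : seq Sigma) (pi : {perm 'I_(size S)}) : seq Sigma :=
  [seq sym (pi k) | k <- enum 'I_(size S)].

(* P swap matches T at (1-based) location i : pi(P) = T_[i, i+p-1]. *)
Definition swap_matches (P T : seq Sigma) (i : nat) : Prop :=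
  0 < i /\ i + size P - 1 <= size T /\
  exists pi : {perm 'I_(size P)},
    is_swap_perm pi /\ swapped pi = take (size P) (drop i.-1 T).

(* A bit vector is a function nat -> bool; only entries 1..p are meaningful
   (all operations below produce 0 outside 1..p). *)
Definition bitvec := nat -> bool.
Variable p : nat.
Definition bzero : bitvec := fun _ => false.
Definition bor (x y : bitvec) : bitvec := fun i => x i || y i.
Definition band (x y : bitvec) : bitvec := fun i => x i && y i.
Definition LShift (x : bitvec) : bitvec := fun i => (2 <= i <= p) && x i.-1.
Definition RShift (x : bitvec) : bitvec := fun i => (1 <= i <= p.-1) && x i.+1.
Definition e1 : bitvec := fun i => (i == 1) && (1 <= p).
Definition LSO (x : bitvec) : bitvec := bor (LShift x) e1.
End Defs.

Definition mask (Sigma : finType) (P : seq Sigma) (x : Sigma) : bitvec :=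
  fun i => (1 <= i <= size P) && (nth x P i.-1 == x).

Definition gsm_step (Sigma : finType) (P : seq Sigma)
    (R : bitvec * bitvec * bitvec) (c : Sigma) : bitvec * bitvec * bitvec :=
  let p := size P in
  let: (RU, RM, RD) := R in
  let RU' := LSO p RD in
  let RM' := LSO p (bor RM RU) in
  let RD' := LSO p (bor RM RU) in
  let D := mask P c in
  (band RU' (LShift p D), band RM' D, band RD' (RShift p D)).

Definition gsm_state (Sigma : finType) (P T : seq Sigma) (j : nat) :=
  foldl (gsm_step P) (bzero, bzero, bzero) (take j T).

Definition RU (Sigma : finType) (P T : seq Sigma) (j : nat) : bitvec :=
  (gsm_state P T j).1.1.
Definition RM (Sigma : finType) (P T : seq Sigma) (j : nat) : bitvec :=
  (gsm_state P T j).1.2.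
Definition RD (Sigma : finType) (P T : seq Sigma) (j : nat) : bitvec :=
  (gsm_state P T j).2.

(* Main.v *)
Require Import Defs.
From mathcomp Require Import all_boot all_fingroup.
From mathcomp Require Import zify.

Section S.
Variables (Sigma : finType) (P T : seq Sigma) (x0 : Sigma).
Local Notation p := (size P).
Local Notation PP k := (nth x0 P k).
Local Notation TT k := (nth x0 T k).

Fixpoint Mw (i j : nat) : bool :=
  match i with
  | 0 => true
  | k.+1 => ((0 < j) && (PP k == TT j.-1) && Mw k j.-1)
      || match k with 0 => false | k'.+1 =>
          (1 < j) && (PP k' == TT j.-1) && (PP k == TT j.-2) && Mw k' j.-2 end
  end.

Lemma maskE (c : Sigma) (i : nat) : Defs.mask P c i = (1 <= i <= p) && (PP i.-1 == c).
Proof.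
rewrite /Defs.mask; case: (boolP (1 <= i <= p)) => //= /andP [h1 h2].
by rewrite (set_nth_default x0) //; lia.
Qed.

Lemma stateS j : j < size T ->
  gsm_state P T j.+1 = gsm_step P (gsm_state P T j) (TT j).
Proof. by move=> h; rewrite /gsm_state (take_nth x0 h) foldl_rcons. Qed.

Lemma inv j : j <= size T -> forall i,
  RM P T j i = (1 <= i <= p) && (0 < j) && (PP i.-1 == TT j.-1) && Mw i.-1 j.-1 /\
  RU P T j i = (2 <= i <= p) && (1 < j) && (PP i.-2 == TT j.-1)
               && (PP i.-1 == TT j.-2) && Mw i.-2 j.-2 /\
  RD P T j i = (1 <= i <= p.-1) && (0 < j) && (PP i == TT j.-1) && Mw i.-1 j.-1.
Proof.
elim: j => [_ i|j IH hj].
  by rewrite /RM /RU /RD /gsm_state take0 /= ?andbF.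
have {}IH := IH (ltnW hj).
move: IH; rewrite /RU /RM /RD stateS //.
case: (gsm_state P T j) => [[ru rm] rd] /= IH i.
rewrite /band /LSO /bor /LShift /RShift /e1 !maskE.
have HM : forall k, k <= p -> Mw k j = (k == 0) || rm k || ru k.
  move=> [|k] hk //=; have [-> [-> _]] := IH k.+1.
  case: k hk => [|k] hk /=; rewrite hk ?andbT ?orbF //=.
case: i => [|k] /=; first by rewrite ?andbF.
have [IM [IU ID]] := IH k.
rewrite !ID.
split; [|split].
- case: (leqP k.+1 p) => hk; last by rewrite !andbF ?andFb.
  rewrite HM; last by lia.
  case: k hk {IM IU ID} => [|k] hk /=; first by rewrite hk andbT.
  by rewrite orbF andbC.
- case: k {IM IU ID} => [|k] /=; first by rewrite !andbF.
  case: (leqP k.+2 p) => hk; last by rewrite !andbF.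
  have h1 : k < p.-1 by lia.
  have h2 : k < p by lia.
  rewrite h1 h2 /= orbF.
  case: j {IH HM hj} => [|j] //=.
  by rewrite andbC -!andbA.
- case: (leqP k.+2 p) => hk; last first.
    rewrite (_ : k < p.-1 = false) ?andbF //; lia.
  have h1 : k < p.-1 by lia.
  rewrite h1 HM ?andbT; last by lia.
  case: k hk h1 {IM IU ID} => [|k] hk h1 /=.
    by rewrite ltnW //= andbT.
  by rewrite (ltnW hk) /= orbF andbC.
Qed.

Lemma Mw_le i j : Mw i j -> i <= j.
Proof.
elim/ltn_ind: i j => [[|i]] IH j //= /orP [/andP [/andP [hj _] H]|].
  by have := IH i (ltnSn _) _ H; lia.
case: i IH => [|i] IH //= /andP [/andP [/andP [hj _] _] H].
by have := IH i (ltnW (ltnSn _)) _ H; lia.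
Qed.

Definition sw (i j : nat) (f : nat -> nat) : Prop :=
  (forall k, k < i -> f k < i) /\ (forall k, k < i -> f (f k) = k) /\
  (forall k, k < i -> f k \in [:: k.-1; k; k.+1]) /\
  (forall k, k < i -> f k != k -> PP (f k) != PP k) /\
  (forall k, k < i -> PP (f k) = TT (j - i + k)).

Lemma Mw_sw i j : Mw i j -> exists f, sw i j f.
Proof.
elim/ltn_ind: i j => i IH j H.
have hij := @Mw_le i j H.
case: i IH H hij => [|i] IH H hij.
  by exists id; split; [|split; [|split; [|split]]] => k; rewrite ltn0.
move: H => /= /orP [/andP [/andP [hj /eqP e] H]|].
  have [f [f1 [f2 [f3 [f4 f5]]]]] := IH i (ltnSn _) _ H.
  exists (fun k => if k == i then i else f k).
  split; [|split; [|split; [|split]]] => k hk /=.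
  - by case: ifP => // /negbT ne; have := f1 k; lia.
  - case: (eqVneq k i) => [->|ne]; rewrite ?eqxx //.
    have hk' : k < i by lia.
    have := f1 k hk'; case: (eqVneq (f k) i) => [->|ne' _]; first by rewrite ltnn.
    by rewrite f2.
  - case: (eqVneq k i) => [->|ne]; first by rewrite !inE eqxx orbT.
    by apply: f3; lia.
  - case: (eqVneq k i) => [->|ne]; first by rewrite eqxx.
    by apply: f4; lia.
  - case: (eqVneq k i) => [->|ne]; first by rewrite e; congr nth; lia.
    rewrite f5; last by lia.
    congr nth; lia.
case: i IH hij => [|i] IH hij //= /andP [/andP [/andP [hj /eqP e1] /eqP e2] H].
have [f [f1 [f2 [f3 [f4 f5]]]]] := IH i (ltnW (ltnSn _)) _ H.
case: (boolP (PP i == PP i.+1)) => [/eqP eq|neq].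
  exists (fun k => if k < i then f k else k).
  split; [|split; [|split; [|split]]] => k hk /=.
  - by case: (ltnP k i) => // hk'; have := f1 k hk'; lia.
  - case: (ltnP k i) => hk'; last by rewrite ltnNge hk'.
    by rewrite f1 // f2.
  - case: (ltnP k i) => hk'; first by apply: f3.
    by rewrite !inE eqxx orbT.
  - case: (ltnP k i) => hk'; first by apply: f4.
    by rewrite eqxx.
  - case: (ltnP k i) => hk'.
      rewrite f5 //; congr nth; lia.
    have [->|->] : k = i \/ k = i.+1 by lia.
      by rewrite eq e2; congr nth; lia.
    by rewrite -eq e1; congr nth; lia.
exists (fun k => if k < i then f k else if k == i then i.+1 else i).
split; [|split; [|split; [|split]]] => k hk /=.
- case: (ltnP k i) => hk'; first by have := f1 k hk'; lia.
  by case: (k == i).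
- case: (ltnP k i) => hk'; first by rewrite f1 // f2.
  case: (eqVneq k i) => [->|ne].
    have e3 : (i.+1 < i) = false by rewrite ltnNge leqnSn.
    have e4 : (i.+1 == i) = false by rewrite gtn_eqF.
    by rewrite e3 e4.
  rewrite ltnn eqxx; lia.
- case: (ltnP k i) => hk'; first by apply: f3.
  case: (eqVneq k i) => [->|ne]; first by rewrite !inE eqxx !orbT.
  have -> : k = i.+1 by lia.
  by rewrite !inE eqxx.
- case: (ltnP k i) => hk'; first by apply: f4.
  case: (eqVneq k i) => [->|ne] _; first by rewrite eq_sym.
  have -> : k = i.+1 by lia.
  by [].
- case: (ltnP k i) => hk'.
    rewrite f5 //; congr nth; lia.
  case: (eqVneq k i) => [->|ne].
    by rewrite e2; congr nth; lia.
  have -> : k = i.+1 by lia.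
  by rewrite e1; congr nth; lia.
Qed.

Lemma sw_Mw i j f : sw i j f -> i <= j -> Mw i j.
Proof.
elim/ltn_ind: i j f => i IH j f [f1 [f2 [f3 [f4 f5]]]] hij.
case: i IH f1 f2 f3 f4 f5 hij => [|i] IH f1 f2 f3 f4 f5 hij //=.
have hi := f1 i (ltnSn _).
have hin := f3 i (ltnSn _).
have [e|e] : f i = i \/ (0 < i /\ f i = i.-1).
  by move: hin; rewrite !inE => /orP [/eqP ->|/orP [/eqP ->|/eqP e]]; lia.
  apply/orP; left.
  rewrite (_ : 0 < j) //=; last by lia.
  apply/andP; split.
    have := f5 i (ltnSn _); rewrite e => ->; apply/eqP; congr nth; lia.
  apply: (IH i (ltnSn _) _ f); last by lia.
  split; [|split; [|split; [|split]]] => k hk.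
  - have := f1 k (ltnW hk); case: (eqVneq (f k) i) => [ek|ne]; last by lia.
    by have := f2 k (ltnW hk); rewrite ek e; lia.
  - exact: f2 k (ltnW hk).
  - exact: f3 k (ltnW hk).
  - exact: f4 k (ltnW hk).
  - rewrite f5; last by lia. congr nth; lia.
case: i IH f1 f2 f3 f4 f5 hij hi hin e => [|i] IH f1 f2 f3 f4 f5 hij hi hin [hi0 e] //.
rewrite /= in e.
have e' : f i = i.+1 by rewrite -{1}e f2.
apply/orP; right.
rewrite (_ : 1 < j) //=; last by lia.
apply/andP; split; [apply/andP; split|].
  have := f5 i.+1 (ltnSn _); rewrite e => ->; apply/eqP; congr nth; lia.
  have := f5 i (ltnW (ltnSn _)); rewrite e' => ->; apply/eqP; congr nth; lia.
apply: (IH i (ltnW (ltnSn _)) _ f); last by lia.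
split; [|split; [|split; [|split]]] => k hk.
- have hk2 : k < i.+2 by lia.
  have := f1 k hk2; have := f2 k hk2.
  case: (eqVneq (f k) i) => [->|ne1]; first by rewrite e'; lia.
  case: (eqVneq (f k) i.+1) => [->|ne2]; first by rewrite e; lia.
  lia.
- apply: f2; lia.
- apply: f3; lia.
- apply: f4; lia.
- rewrite f5; last by lia. congr nth; lia.
Qed.

Lemma symE (k : 'I_p) : sym k = PP k.
Proof. by rewrite /sym (tnth_nth x0). Qed.

Lemma nth_swapped (pi : {perm 'I_p}) k (hk : k < p) :
  nth x0 (swapped pi) k = PP (pi (Ordinal hk)).
Proof.
rewrite /swapped (nth_map (Ordinal hk)) ?size_enum_ord // symE.
congr (nth _ _ (nat_of_ord (pi _))); apply: val_inj => /=.
by rewrite nth_enum_ord.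
Qed.

Lemma size_win j : p <= j -> j <= size T -> size (take p (drop (j - p) T)) = p.
Proof. by move=> h1 h2; rewrite size_takel // size_drop; lia. Qed.

Lemma nth_win j k : p <= j -> k < p ->
  nth x0 (take p (drop (j - p) T)) k = TT (j - p + k).
Proof. by move=> h1 h2; rewrite nth_take // nth_drop. Qed.

Lemma sw_perm j f : p <= j -> j <= size T -> sw p j f ->
  exists pi : {perm 'I_p}, is_swap_perm pi /\ swapped pi = take p (drop (j - p) T).
Proof.
move=> h1 h2 [f1 [f2 [f3 [f4 f5]]]].
pose g (k : 'I_p) : 'I_p := Ordinal (f1 k (ltn_ord k)).
have ginj : injective g.
  move=> a b /(congr1 val) /= e; apply: val_inj => /=.
  by rewrite -(f2 a) // e f2.
exists (perm ginj); split; [split; [|split]|].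
- by move=> k; apply: val_inj; rewrite !permE /= f2.
- by move=> k; rewrite permE /= f3.
- move=> k; rewrite !symE permE /= => h; apply: f4 => //.
- apply: (@eq_from_nth _ x0); first by rewrite size_win // size_map size_enum_ord.
  rewrite size_map size_enum_ord => k hk.
  by rewrite nth_swapped nth_win // permE /= f5.
Qed.

Lemma perm_sw j (pi : {perm 'I_p}) : p <= j -> j <= size T -> is_swap_perm pi ->
  swapped pi = take p (drop (j - p) T) -> exists f, sw p j f.
Proof.
move=> h1 h2 [g1 [g2 g3]] e.
pose f k := odflt k (omap (fun o => nat_of_ord (pi o)) (@insub _ (fun k => k < p) 'I_p k)).
have fE (o : 'I_p) : f o = pi o by rewrite /f valK.
have fE' k (hk : k < p) : f k = pi (Ordinal hk).
  exact: (fE (Ordinal hk)).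
exists f; split; [|split; [|split; [|split]]] => k hk.
- by rewrite fE'.
- by rewrite (fE' k hk) fE g1.
- by rewrite (fE' k hk) g2.
- rewrite (fE' k hk) => h; have := g3 (Ordinal hk); rewrite !symE /=; apply.
  by apply: contra h => /eqP ->.
- by rewrite (fE' k hk) -nth_swapped e nth_win.
Qed.

Lemma bitE j : 0 < p -> j <= size T -> (RU P T j p || RM P T j p) = Mw p j.
Proof.
move=> hp hj; have [IM [IU _]] := @inv j hj p.
rewrite IU IM; move: hp; case: (size P) => [//|q] _.
rewrite leqnn /= andbT.
case: q => [|q] /=; first by rewrite orbC.
by rewrite orbC.
Qed.

Lemma main j : 0 < p -> 1 <= j <= size T ->
  ((RU P T j p || RM P T j p) = true <->
   (p <= j /\ swap_matches P T (j - p + 1))).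
Proof.
move=> hp /andP [hj1 hj2]; rewrite bitE //.
have ej : (j - p + 1).-1 = j - p by rewrite addn1.
split.
- move=> M; have hpj := @Mw_le _ _ M.
  split => //; split; first by lia.
  split; first by lia.
  rewrite ej; have [f sf] := @Mw_sw _ _ M.
  exact: (@sw_perm j f).
- move=> [hpj [_ [_ [pi [sp e]]]]].
  rewrite ej in e; have [f sf] := @perm_sw j pi hpj hj2 sp e.
  exact: (@sw_Mw p j f).
Qed.
End S.

Theorem mainTheorem3 (Sigma : finType) (P T : seq Sigma) (j : nat) :
  0 < size P -> 1 <= j <= size T ->
  ((RU P T j (size P) || RM P T j (size P)) = true <->
   (size P <= j /\ swap_matches P T (j - size P + 1))).
Proof.
case: P => [//|a P'] hp hj.
exact: (@main Sigma (a :: P') T a j hp hj).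
Qed.
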